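(* Let $a,b,c$ be positive integers that are not all equal, and let $n=a+b+c$. Let $A=\{1,\dots,a\}$, $B=\{a+1,\dots,a+b\}$ and $C=\{a+b+1,\dots,n\}$. Define the $n\times n$ array $M=(M_{i,j})_{i,j\in[n]}$ of subsets of $[n]$ by \[ M_{i,j}=\begin{cases} A&\text{if } i\in A \text{ and } j\in A,\\ B&\text{if } i\in B \text{ and } j\in B,\\ C&\text{if } i\in C \text{ and } j\in C,\\ \emptyset&\text{otherwise}. \end{cases} \] Let $k\ge 1$ and let $N=(N_{i,j})_{i,j\in[n]}$ be any $(n^2,k)$-array. Then there exist $i,j\in[n]$ with $M_{i,j}\cap N_{i,j}\neq\emptyset$.
   Context: $[n]=\{1,2,\dots,n\}$. For positive integers $n,d,k$, an $(n^d,k)$-array is a $d$-dimensional array of dimensions $n\times n\times\cdots\times n$ such that each entry is a subset of $[n]$ of cardinality exactly $k$, and every number in $[n]$ occurs in exactly $k$ of the entries along any axis-parallel line of the array (an axis-parallel line is the set of $n$ cells obtained by fixing all coordinates but one). In particular an $(n^2,k)$-array is an $n\times n$ array of $k$-subsets of $[n]$ in which each symbol of $[n]$ lies in exactly $k$ entries of each row and exactly $k$ entries of each column. *)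

(* Defs.v *)
From mathcomp Require Import all_boot.
Set Implicit Arguments. Unset Strict Implicit. Unset Printing Implicit Defensive.

(* Convention: [n] = {1,...,n} is represented by 'I_n, the element i : 'I_n
   standing for the number i+1.  Both cell coordinates and symbols use this. *)

Definition is_array2 (n k : nat) (N : 'I_n -> 'I_n -> {set 'I_n}) : Prop :=
  (forall i j, #|N i j| = k) /\
  (forall i (s : 'I_n), #|[set j | s \in N i j]| = k) /\
  (forall j (s : 'I_n), #|[set i | s \in N i j]| = k).

(* The block of [n] containing (i+1): 0 for A = {1..a}, 1 for B, 2 for C. *)
Definition block (a b : nat) (x : nat) : nat :=
  if x < a then 0 else if x < a + b then 1 else 2.

Definition block_set (a b c : nat) (t : nat) : {set 'I_(a + b + c)} :=
  [set x : 'I_(a + b + c) | block a b x == t].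

Definition Marr (a b c : nat) (i j : 'I_(a + b + c)) : {set 'I_(a + b + c)} :=
  if block a b i == block a b j then block_set a b c (block a b i) else set0.

(* Main.v *)
Require Import Defs.
From mathcomp Require Import all_boot.
From mathcomp Require Import zify.

Lemma sumblock (a b c : nat) (f : nat -> nat) :
  \sum_(i < a + b + c) f (block a b i) = a * f 0 + b * f 1 + c * f 2.
Proof.
rewrite -(big_mkord xpredT (fun i => f (block a b i))).
rewrite (@big_cat_nat _ _ _ (a + b)) /=; [|lia|lia].
rewrite (@big_cat_nat _ _ _ a) /=; [|lia|lia].
rewrite (@eq_big_nat _ _ _ 0 a _ (fun _ => f 0)); last first.
  by move=> i /andP[_ H]; rewrite /block H.
rewrite (@eq_big_nat _ _ _ a (a + b) _ (fun _ => f 1)); last first.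
  by move=> i /andP[H1 H2]; rewrite /block H2 ltnNge H1.
rewrite (@eq_big_nat _ _ _ (a + b) (a + b + c) _ (fun _ => f 2)); last first.
  move=> i /andP[H1 H2]; rewrite /block.
  have -> : (i < a) = false by lia.
  by have -> : (i < a + b) = false by lia.
rewrite !sum_nat_const_nat; lia.
Qed.

Lemma sum_card (n : nat) (P : pred 'I_n) :
  \sum_(j < n) (P j : nat) = #|[set j | P j]|.
Proof.
rewrite -sum1_card [RHS]big_mkcond /=; apply: eq_bigr => j _; rewrite inE.
by case: (P j).
Qed.

Lemma eq3 (a b c : nat) : 3 * (a * a + b * b + c * c) <= (a+b+c)*(a+b+c) -> a = b /\ b = c.
Proof.
move=> Q.
have H : (a * a + b * b + c * c) <= a*b+b*c+c*a by nia.
have E1 : (a - b) * (a - b) + (b - a) * (b - a) + (b - c) * (b - c) + (c - b) * (c - b) + (a - c) * (a - c) + (c - a) * (c - a) = 0.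
  nia.
move/eqP: E1; rewrite !addn_eq0 !muln_eq0 !orbb !subn_eq0 => E; lia.
Qed.

Theorem theorem1 (a b c k : nat) :
  0 < a -> 0 < b -> 0 < c -> ~ (a = b /\ b = c) -> 1 <= k ->
  forall N : 'I_(a + b + c) -> 'I_(a + b + c) -> {set 'I_(a + b + c)},
  @is_array2 (a + b + c) k N ->
  exists i j : 'I_(a + b + c), @Marr a b c i j :&: N i j != set0.
Proof.
move=> Ha Hb Hc Hne Hk N [Hcell [Hrow Hcol]].
set n := a + b + c.
case: (pickP (fun p : 'I_n * 'I_n => Marr p.1 p.2 :&: N p.1 p.2 != set0)).
  by move=> [i j] /= H; exists i, j.
move=> H0.
pose bl := fun x : 'I_n => block a b x.
have Z : forall (s i j : 'I_n), bl i == bl j -> bl s == bl i -> (s \in N i j) = false.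
  move=> s i j Hij Hs; apply/negP => Hin.
  have := H0 (i, j); rewrite /= => /negbFE/eqP E.
  have : s \in Marr i j :&: N i j.
    rewrite inE Hin andbT /Marr Hij /block_set inE.
    by move: Hs; rewrite /bl.
  by rewrite E inE.
have R : forall s i, \sum_(j < n) ((s \in N i j) : nat) = k.
  by move=> s i; rewrite sum_card Hrow.
have C : forall s j, \sum_(i < n) ((s \in N i j) : nat) = k.
  by move=> s j; rewrite sum_card Hcol.
have Ce : forall i j, \sum_(s < n) ((s \in N i j) : nat) = k.
  by move=> i j; rewrite sum_card -(Hcell i j); apply: eq_card => y; rewrite inE.
pose x := fun t => \sum_(i < n) ((bl i == t) : nat).
have PS : forall s : 'I_n,
  \sum_(i < n) \sum_(j < n) ((bl i == bl j) * (s \in N i j))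
  + k * x (bl s) + k * x (bl s) <= n * k.
  move=> s.
  have E1 : \sum_(i < n) \sum_(j < n) ((bl j == bl s) * (s \in N i j)) = k * x (bl s).
    rewrite exchange_big /= /x big_distrr /=; apply: eq_bigr => j _.
    by rewrite -big_distrr /= C mulnC.
  have E2 : \sum_(i < n) \sum_(j < n) ((bl i == bl s) * (s \in N i j)) = k * x (bl s).
    rewrite /x big_distrr /=; apply: eq_bigr => i _.
    by rewrite -big_distrr /= R mulnC.
  have E3 : \sum_(i < n) \sum_(j < n) ((s \in N i j) : nat) = n * k.
    rewrite (eq_bigr (fun _ => k)); last by move=> i _; exact: R.
    by rewrite sum_nat_const card_ord.
  rewrite -E3 -{1}E1 -E2 -!big_split /=; apply: leq_sum => i _.
  rewrite -!big_split /=; apply: leq_sum => j _.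
  case Ei: (bl i == bl s); case Ej: (bl j == bl s); case Eij: (bl i == bl j);
    case e: (s \in N i j) => //=.
  all: try first [ by move: e; rewrite Z // eq_sym Ei
              | by rewrite (eqP Eij) Ej in Ei
              | by rewrite -(eqP Eij) Ei in Ej
              | by rewrite (eqP Ei) (eqP Ej) eqxx in Eij ].
have Sum : \sum_(s < n) (\sum_(i < n) \sum_(j < n) ((bl i == bl j) * (s \in N i j))
  + k * x (bl s) + k * x (bl s)) <= \sum_(s < n) (n * k).
  by apply: leq_sum => s _; exact: PS.
rewrite !big_split /= sum_nat_const card_ord in Sum.
rewrite exchange_big /= in Sum.
rewrite (eq_bigr (fun i => k * x (bl i))) in Sum; last first.
  move=> i _; rewrite exchange_big /= /x big_distrr /=; apply: eq_bigr => j _.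
  by rewrite -big_distrr /= Ce mulnC eq_sym.
rewrite -!big_distrr /= in Sum.
have Hx : forall t, x t = a * (0 == t) + b * (1 == t) + c * (2 == t).
  by move=> t; rewrite /x /bl (sumblock a b c (fun u => (u == t) : nat)).
have P : \sum_(i < n) x (bl i) = a * a + b * b + c * c.
  rewrite /bl (sumblock a b c (fun u => x u)) !Hx /=; lia.
rewrite P in Sum.
have Q : 3 * (a * a + b * b + c * c) <= n * n.
  rewrite -(leq_pmul2l Hk); rewrite /n in Sum *; lia.
exfalso; apply: Hne; apply: eq3; exact: Q.
Qed.
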